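(* Let $n,k$ be positive integers such that $s^{n,k}=\frac{n(n+1)}{2k}$ is an integer, let $l<k$, and let $p_1\le p_2\le\cdots\le p_l$ be positive integers (an incomplete ascending partition $P=[p_1,\ldots,p_l]$) satisfying: (i) $n-\sum_{i=1}^l p_i\ge (k-l)p_l$; and (ii) $\mathrm{slack}_j(P)=\sum_{i=1}^{p_1+\cdots+p_j}(n-i+1)-j\,s^{n,k}\ge 0$ for all $j\le l$. Then there exist integers $p_{l+1},\ldots,p_k$ such that $\mathcal P=[p_1,\ldots,p_k]\in AP_{n,k}$ and $\mathrm{slack}(\mathcal P)\ge 0$.
   Context: An ascending partition of $n$ of size $k$ is a sequence of positive integers $[p_1,\ldots,p_k]$ with $p_1\le\cdots\le p_k$ and $\sum_i p_i=n$; $AP_{n,k}$ is the set of all such partitions when $s^{n,k}$ is an integer. For $\mathcal P\in AP_{n,k}$ and $j=1,\ldots,k$, $\mathrm{slack}_j(\mathcal P)=\sum_{i=1}^{p_1+\cdots+p_j}(n-i+1)-j\,s^{n,k}$, and $\mathrm{slack}(\mathcal P)=\min_{1\le j\le k-1}\mathrm{slack}_j(\mathcal P)$. *)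

(* Defs.v *)
From mathcomp Require Import all_boot all_order all_algebra.
Set Implicit Arguments. Unset Strict Implicit. Unset Printing Implicit Defensive.
Import Order.TTheory GRing.Theory Num.Theory.

(* s^{n,k} = n(n+1)/(2k); used only when 2k divides n(n+1). *)
Definition snk (n k : nat) : nat := (n * (n + 1)) %/ (2 * k).

Definition is_asc_partition (n k : nat) (P : seq nat) : bool :=
  [&& size P == k, all (fun p => 0 < p) P, sorted leq P & sumn P == n].

Definition slack_j (n k : nat) (P : seq nat) (j : nat) : int :=
  ((\sum_(1 <= i < (sumn (take j P)).+1) ((n%:Z - i%:Z + 1)))
   - (j * snk n k)%:Z)%R.

Definition slack_nonneg (n k : nat) (P : seq nat) : Prop :=
  forall j, 1 <= j <= k.-1 -> (0 <= slack_j n k P j)%R.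

(* Main.v *)
Require Import Defs.
From mathcomp Require Import all_boot all_order all_algebra zify ring.
Import Order.TTheory GRing.Theory Num.Theory.
Lemma keyA (u q rem t : nat) : 0 < q -> 0 < t -> rem <= u ->
  t * (q*(t+u)+rem) * (q*(t+u)+rem+1) <= (t+u) * (t*q) * (u*q + rem + (q*(t+u)+rem) + 1).
Proof.
move=> q0 t0 ru.
set m := q*(t+u)+rem.
have E : m* (m+1) + (t+u)*q*q*u = (t+u)*q*(u*q + rem + m + 1) + rem*(rem+1).
  rewrite /m; ring.
have h1: (rem+1) * rem <= (t+u) * u by apply: leq_mul; lia.
have h2: (t+u) * u <= (t+u)*q*q*u.
  have -> : (t+u)*q*q*u = (q*q)*((t+u)*u) by ring.
  by apply: leq_pmull; rewrite muln_gt0 q0.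
have H : m* (m+1) <= (t+u)*q*(u*q + rem + m + 1).
  rewrite mulnC in h1. lia.
have := leq_mul (leqnn t) H.
have -> : t * (m* (m+1)) = t* m* (m+1) by ring.
have -> : t*((t+u)*q*(u*q + rem + m + 1)) = (t+u)*(t*q)*(u*q + rem + m + 1) by ring.
done.
Qed.
Lemma keyB (q rem t w x : nat) : 0 < q -> 0 < w -> w < rem -> rem < t + w ->
  x + w*(q+1) = q*(t+w)+rem ->
  t * (q*(t+w)+rem) * (q*(t+w)+rem+1) <= (t+w) * x * ((q*(t+w)+rem) + w*(q+1) + 1).
Proof.
move=> q0 w0 wr rr Ex.
set m := q*(t+w)+rem. set r := t + w. set y := w*(q+1).
have I1 : r * x * (m+y+1) + r*y*(y+1) = r * m * (m+1).
  have -> : m = x + y by rewrite Ex.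
  ring.
set c := w*(q+1)+1.
have hc : c + q*(r - rem + 1) <= m.
  have h : q*(r - rem + 1) <= q * t by apply: leq_mul => //; rewrite /r; lia.
  rewrite /c /m /r in h *. lia.
have hz : 0 < r - rem by lia.
set z := r - rem in hc hz.
have H1 : (m+z)*c + (m+z)*(q*(z+1)) <= (m+z)* m.
  rewrite -mulnDr. apply: leq_mul => //.
have H2 : (m+z)*(z+1) <= (m+z)*(q*(z+1)).
  apply: leq_mul => //. by apply: leq_pmull.
have H3 : r*(q+1) = m + z.
  rewrite /z /m /r. lia.
have H4 : r * (q+1) * c <= m* (m+1).
  rewrite H3. lia.
have H5 : r*y*(y+1) = w * (r*(q+1)*c).
  rewrite /y /c. ring.
have H6 : r*y*(y+1) <= w* (m* (m+1)) by rewrite H5; apply: leq_mul.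
have H7 : r * m * (m+1) = t* m* (m+1) + w* (m* (m+1)) by rewrite /r; ring.
lia.
Qed.
Lemma path_nseq (x y a : nat) : x <= y -> path leq x (nseq a y).
Proof. by elim: a x => [|a IH] x //= xy; rewrite xy IH. Qed.

Lemma last_nseq_le (x y a : nat) : x <= y -> last x (nseq a y) <= y.
Proof. by elim: a x => [|a IH] x xy //=; apply: IH. Qed.

Local Open Scope ring_scope.
Lemma sumF (n S : nat) : (2 * \sum_(1 <= i < S.+1) (n%:Z - i%:Z + 1) = S%:Z * (2 * n%:Z - S%:Z + 1))%R.
Proof.
elim: S => [|S IH]; first by rewrite big_geq.
rewrite big_nat_recr //= mulrDr IH. lia.
Qed.
Local Close Scope ring_scope.

Theorem mainTheorem5 (n k l : nat) (P : seq nat) :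
  0 < n -> 0 < k ->
  (2 * k %| n * (n + 1))%N ->
  0 < l -> l < k ->
  size P = l ->
  all (fun p => 0 < p) P ->
  sorted leq P ->
  (((k - l) * last 0 P)%:Z <= n%:Z - (sumn P)%:Z)%R ->
  (forall j, 1 <= j <= l -> (0 <= slack_j n k P j)%R) ->
  exists Q : seq nat,
    is_asc_partition n k (P ++ Q) /\ slack_nonneg n k (P ++ Q).
Proof.
move=> n0 k0 dv l0 lk sP posP sortP Hi Hsl.
case: P sP posP sortP Hi Hsl => [|p0 P'] sP posP sortP Hi Hsl; first by rewrite -sP in l0.
set P := p0 :: P' in sP posP sortP Hi Hsl *.
have lastpos : 0 < last 0 P.
  have : last 0 P \in P by rewrite /P /= mem_last.
  by move/(allP posP).
set T := sumn P in Hi *.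
set r := k - l.
have r0 : 0 < r by rewrite /r subn_gt0.
move: Hi; set a := r * last 0 P => Hi.
have Tn : T <= n by lia.
set m := n - T.
have Hi' : r * last 0 P <= m by rewrite -/a /m; lia.
set q := m %/ r. set rem := m %% r.
have mE : m = q * r + rem by rewrite /q /rem -divn_eq.
have remr : rem < r by rewrite /rem ltn_pmod.
have lastq : last 0 P <= q by rewrite /q leq_divRL // mulnC.
have q0 : 0 < q by apply: leq_trans lastq.
set Q := nseq (r - rem) q ++ nseq rem q.+1.
have sumQ : sumn Q = m by rewrite /Q sumn_cat !sumn_nseq; lia.
exists Q; split.
  apply/and4P; split.
  - by rewrite size_cat /Q size_cat !size_nseq sP; apply/eqP; lia.
  - rewrite all_cat posP /Q all_cat !all_nseq /=.
    by rewrite q0 ltn0Sn !orbT.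
  - rewrite /P /= cat_path.
    have -> : path leq p0 P' by exact: sortP.
    rewrite /Q cat_path path_nseq //=.
    apply: path_nseq. apply: leqW. exact: last_nseq_le.
  - by rewrite sumn_cat sumQ /m subnKC.
move=> j /andP[j1 jk].
have dvE : (2 * k * snk n k = n * (n + 1))%N by rewrite /snk mulnC divnK.
set s := snk n k in dvE *.
case: (leqP j l) => jl.
  rewrite /slack_j takel_cat ?sP //.
  by have := Hsl j; rewrite /slack_j; apply; rewrite j1 jl.
have HT := Hsl l; rewrite /slack_j take_oversize ?sP // l0 leqnn in HT.
have /(_ isT) HT' := HT; clear HT.
rewrite -/T -/s in HT'.
set t := j - l.
have jE : j = l + t by rewrite /t subnKC // ltnW.
have t0 : 0 < t by rewrite /t subn_gt0.
have tr : t < r by rewrite /t /r; lia.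
rewrite /slack_j take_cat sP ltnNge (ltnW jl) /= -/t sumn_cat -/T.
set x := sumn (take t Q).
have -> : (p0 + (sumn P' + x) = T + x)%N by rewrite /T /= addnA.
rewrite -/s.
have [y xy K] : exists2 y, x + y = m & (t * m * (m+1) <= r * x * (m + y + 1))%N.
  case: (leqP t (r - rem)) => tle.
    have xE : x = t * q by rewrite /x /Q takel_cat ?size_nseq // take_nseq // sumn_nseq mulnC.
    have := @keyA (r - t) q rem t q0 t0 ltac:(lia); rewrite subnKC ?(ltnW tr) //.
    rewrite -mE => Kk.
    exists ((r-t)*q + rem); first by rewrite xE mE; lia.
    rewrite xE; apply: (leq_trans Kk); apply: eq_leq; ring.
  have xE : x = (r - rem) * q + (t - (r - rem)) * q.+1.
    rewrite /x /Q take_cat size_nseq ltnNge (ltnW tle) /= take_nseq ?sumn_cat ?sumn_nseq; first by rewrite mulnC (mulnC _ q.+1).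
    lia.
  have := @keyB q rem t (r - t) x q0 ltac:(lia) ltac:(lia) ltac:(lia).
  rewrite subnKC ?(ltnW tr) // -mE => Kk.
  exists ((r - t) * (q + 1)); last by apply: Kk; rewrite mE xE; lia.
  have : x + (r - t) * (q + 1) = m by rewrite mE xE; lia.
  done.
have e1 := sumF n T. have e2 := sumF n (T + x).
move: HT' e1 e2.
set A := (\sum_(1 <= i < T.+1) _)%R.
set B := (\sum_(1 <= i < (T + x).+1) _)%R.
move=> HA e1 e2.
have nE : n = T + (x + y) by rewrite xy /m subnKC.
have kE : k = l + r by rewrite /r subnKC // ltnW.
rewrite jE.
rewrite -xy in K. clearbody A B.
move: HA e1 e2 dvE K. rewrite nE kE. clear -r0 tr.
move=> HA e1 e2 dvE K.
have P1 : (0 <= (r - t)%:Z * (A - (l * s)%:Z))%R by apply: mulr_ge0; lia.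
have e1r : (r%:Z * (2 * A) = r%:Z * (T%:Z * (2 * (T + (x + y))%:Z - T%:Z + 1)))%R by rewrite e1.
have e1t : (t%:Z * (2 * A) = t%:Z * (T%:Z * (2 * (T + (x + y))%:Z - T%:Z + 1)))%R by rewrite e1.
have e2r : (r%:Z * (2 * B) = r%:Z * ((T + x)%:Z * (2 * (T + (x + y))%:Z - (T + x)%:Z + 1)))%R by rewrite e2.
have Ht : (t * (2 * (l + r) * s) = t * ((T + (x + y)) * (T + (x + y) + 1)))%N by rewrite dvE.
have : (0 <= r%:Z * (B - ((l + t) * s)%:Z))%R.
  lia.
have r0z : (0 < r%:Z)%R by rewrite ltz_nat.
by rewrite pmulr_rge0.
Qed.
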